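(* Let $\mathcal{X}$ be a Banach lattice and, for each $\mathbf w\in\mathbb{R}^n_+$, let $\mathcal{A}_{\mathbf w}$ generate a positive eventually compact strongly continuous semigroup on $\mathcal{X}$, such that $\mathbf w_k\to\mathbf w$ implies $\mathcal{A}_{\mathbf w_k}\to\mathcal{A}_{\mathbf w}$ in the generalised sense. Let $S=\{\mathbf w\in\mathbb{R}^n_+ : s(\mathcal{A}_{\mathbf w})=0\}$ and for $\mathbf w\in S$ let $N_{\mathbf w}=\mathcal{S}_+\cap\ker(\mathcal{A}_{\mathbf w})$. Assume that for every $\mathbf w\in S$ the geometric multiplicity of the eigenvalue $s(\mathcal{A}_{\mathbf w})=0$ equals its algebraic multiplicity and that $\ker(\mathcal{A}_{\mathbf w})$ has a basis of non-negative vectors. Then the set-valued map $F:\mathcal{A}_{\mathbf w}\mapsto N_{\mathbf w}$ ($\mathbf w\in S$) is upper hemicontinuous in the sequential sense: whenever $\mathbf w_k,\mathbf w\in S$, $\mathbf w_k\to\mathbf w$, $u_k\in N_{\mathbf w_k}$ and $u_k\to u$ in $\mathcal{X}$, then $u\in N_{\mathbf w}$.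
   Context: $s(T)$ denotes the spectral bound $\sup\{\operatorname{Re}\lambda:\lambda\in\sigma(T)\}$. $\mathcal{S}_+=\{u\in\mathcal{X}_+:\|u\|=1\}$ is the intersection of the unit sphere with the positive cone. Generalised convergence: $T_n\to T$ if $\bar d(T_n,T)\to0$, where $\bar d(T,S)=\max\{d(G(T),G(S)),d(G(S),G(T))\}$, $G(\cdot)$ is the graph and $d(M,N)=\sup_{u\in M,\|u\|=1}\inf_{v\in N}\|u-v\|$. *)

(* Defs.v *)
From HB Require Import structures.
From mathcomp Require Import all_boot all_order all_algebra.
From mathcomp Require Import all_classical all_reals all_analysis.
Set Implicit Arguments. Unset Strict Implicit. Unset Printing Implicit Defensive.
Import Order.TTheory GRing.Theory Num.Theory.
Import numFieldNormedType.Exports.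
Local Open Scope classical_set_scope.
Local Open Scope ring_scope.

Section Defs.
Variables (R : realType) (X : completeNormedModType R).

Definition is_lub (le : X -> X -> Prop) (x y s : X) : Prop :=
  le x s /\ le y s /\ forall t, le x t -> le y t -> le s t.

Definition banach_lattice (le : X -> X -> Prop) : Prop :=
  [/\ (forall x, le x x),
      (forall x y, le x y -> le y x -> x = y),
      (forall x y z, le x y -> le y z -> le x z) &
      (forall x y z, le x y -> le (x + z) (y + z))] /\
  [/\
      (forall (a : R) x y, 0 <= a -> le x y -> le (a *: x) (a *: y)),
      (forall x y, exists s, is_lub le x y s) &
      (forall x y ax ay, is_lub le x (- x) ax -> is_lub le y (- y) ay ->
         le ax ay -> `|x| <= `|y|)].

Definition positive_cone (le : X -> X -> Prop) : set X := [set x | le 0 x].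

Definition bounded_linear_op (L : X -> X) : Prop :=
  (forall (a : R) x y, L (a *: x + y) = a *: L x + L y) /\ continuous L.

Definition C0_semigroup (T : R -> X -> X) : Prop :=
  [/\ (forall t, 0 <= t -> bounded_linear_op (T t)),
      (forall x, T 0 x = x),
      (forall t s x, 0 <= t -> 0 <= s -> T (t + s) x = T t (T s x)) &
      (forall x, {within [set t : R | 0 <= t], continuous (fun t => T t x)})].

Definition generates (D : set X) (A : X -> X) (T : R -> X -> X) : Prop :=
  (forall x, D x <-> cvg ((fun h : R => h^-1 *: (T h x - x)) @ 0^'+)) /\
  (forall x, D x -> (fun h : R => h^-1 *: (T h x - x)) @ 0^'+ --> A x).

Definition positive_semigroup (le : X -> X -> Prop) (T : R -> X -> X) : Prop :=
  forall t x, 0 <= t -> le 0 x -> le 0 (T t x).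

Definition compact_op (L : X -> X) : Prop :=
  compact (closure (L @` [set x | `|x| <= 1])).

Definition eventually_compact (T : R -> X -> X) : Prop :=
  exists t0 : R, 0 < t0 /\ compact_op (T t0).

(* lambda = a + i b belongs to the resolvent set iff lambda - A : D(A)_C -> X_C
   is bijective (for a closed operator, e.g. a generator, the inverse is then
   automatically bounded). *)
Definition in_resolvent (D : set X) (A : X -> X) (a b : R) : Prop :=
  (forall f g : X, exists x y : X, D x /\ D y /\
      a *: x - b *: y - A x = f /\ b *: x + a *: y - A y = g) /\
  (forall x y x' y' : X, D x -> D y -> D x' -> D y' ->
      a *: x - b *: y - A x = a *: x' - b *: y' - A x' ->
      b *: x + a *: y - A y = b *: x' + a *: y' - A y' -> x = x' /\ y = y').

Definition spectrum (D : set X) (A : X -> X) : set (R * R) :=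
  [set p | ~ in_resolvent D A p.1 p.2].

Definition spectral_bound (D : set X) (A : X -> X) : \bar R :=
  ereal_sup [set (p.1)%:E | p in spectrum D A].

Definition kernel (D : set X) (A : X -> X) : set X := [set u | D u /\ A u = 0].

Definition gen_kernel (D : set X) (A : X -> X) : set X :=
  [set u | exists k : nat,
     (forall j, (j < k)%N -> D (iter j A u)) /\ iter k A u = 0].

Definition is_basis (V : set X) (m : nat) (b : 'I_m -> X) : Prop :=
  [/\ (forall i, V (b i)),
      (forall c : 'I_m -> R, \sum_(i < m) c i *: b i = 0 -> forall i, c i = 0) &
      (forall v, V v -> exists c : 'I_m -> R, v = \sum_(i < m) c i *: b i)].

Definition has_dim (V : set X) (m : nat) : Prop :=
  exists b : 'I_m -> X, is_basis V b.

Definition geom_eq_alg_mult0 (D : set X) (A : X -> X) : Prop :=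
  forall m, has_dim (kernel D A) m <-> has_dim (gen_kernel D A) m.

Definition nonneg_basis_kernel (le : X -> X -> Prop) (D : set X) (A : X -> X)
  : Prop :=
  exists m (b : 'I_m -> X), is_basis (kernel D A) b /\ forall i, le 0 (b i).

Definition pnorm (p : X * X) : R := `|p.1| + `|p.2|.
Definition pdist (p q : X * X) : R := `|p.1 - q.1| + `|p.2 - q.2|.

Definition graph (D : set X) (A : X -> X) : set (X * X) :=
  [set (u, A u) | u in D].

Definition gap_d (M N : set (X * X)) : \bar R :=
  ereal_sup ([set 0%E] `|`
    [set ereal_inf [set (pdist u v)%:E | v in N] | u in [set u | M u /\ pnorm u = 1]]).

Definition gap_bar (D1 : set X) (A1 : X -> X) (D2 : set X) (A2 : X -> X) : \bar R :=
  Order.max (gap_d (graph D1 A1) (graph D2 A2)) (gap_d (graph D2 A2) (graph D1 A1)).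

Definition Nset (le : X -> X -> Prop) (D : set X) (A : X -> X) : set X :=
  [set u | `|u| = 1 /\ le 0 u /\ kernel D A u].

End Defs.

Definition nonneg_vec (R : realType) (n : nat) (w : 'rV[R]_n) : Prop :=
  forall i, 0 <= w ord0 i.

(* Main.v *)
Require Import Defs.
Set Warnings "-notation-overridden -ambiguous-paths -notation-incompatible-prefix".
From HB Require Import structures.
From mathcomp Require Import all_boot all_order all_algebra.
From mathcomp Require Import all_classical all_reals all_analysis.
From mathcomp Require Import ring.
Import Order.TTheory GRing.Theory Num.Theory.
Import numFieldNormedType.Exports.
Local Open Scope classical_set_scope.
Local Open Scope ring_scope.
Section H.
Variables (R : realType) (X : completeNormedModType R).

Lemma cone_closed (le : X -> X -> Prop) (uk : nat -> X) (u : X) :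
  banach_lattice le -> (forall k, le 0 (uk k)) -> uk @ \oo --> u -> le 0 u.
Proof.
move=> [[lerefl leanti letrans leadd] [lescale lubex lnorm]] pos cv.
have [p [lp1 [lp2 lp3]]] := lubex (-u) 0.
have key : forall k, `|p| <= `|u - uk k|.
  move=> k; set d := u - uk k.
  have [c hc] := lubex d (-d); have [dc [ndc _]] := hc.
  apply: (lnorm p d p c) => //.
    split; first exact: lerefl.
    split; last by move=> t ? _.
    apply: (letrans (-p) 0 p) => //.
    by have := leadd 0 p (-p) lp2; rewrite add0r subrr.
  apply: lp3.
    have := leadd 0 (uk k) (-d - uk k) (pos k).
    have e1 : uk k + (-d - uk k) = -d by rewrite addrC subrK.
    have e2 : -d - uk k = -u by rewrite /d opprB addrAC subrr add0r.
    rewrite add0r e1 e2 => h.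
    exact: letrans h ndc.
  have h1 : le 0 (c + d) by have := leadd _ _ d ndc; rewrite addNr.
  have h2 : le (d + c) (c + c) := leadd _ _ c dc.
  have h3 : le 0 (c + c) by apply: letrans h1 _; rewrite addrC.
  have := lescale (2^-1) _ _ _ h3; rewrite scaler0.
  have -> : (2^-1 : R) *: (c + c) = c.
    have h2i : (2^-1 + 2^-1 : R) = 1 by rewrite [RHS](splitr 1) mul1r.
    by rewrite scalerDr -scalerDl h2i scale1r.
  by apply; rewrite invr_ge0.
have p0 : p = 0.
  apply/eqP; rewrite -normr_le0; apply/ler_addgt0Pr => e e0.
  rewrite add0r.
  move: (cv) => /cvgrPdist_lt /(_ e e0) /filter_ex [k hk].
  exact: le_trans (key k) (ltW hk).
by have := leadd _ _ u lp1; rewrite p0 addNr add0r.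
Qed.

Lemma lin0 (L : X -> X) : bounded_linear_op L -> L 0 = 0.
Proof.
move=> [h _]; have := h 1 0 0; rewrite !scale1r addr0.
by move/(congr1 (fun z => z - L 0)); rewrite subrr addrK => <-.
Qed.

Lemma linZ (L : X -> X) a x : bounded_linear_op L -> L (a *: x) = a *: L x.
Proof. move=> hL; have := hL.1 a x 0; rewrite addr0 lin0 // addr0; exact: id. Qed.

Lemma linB (L : X -> X) x y : bounded_linear_op L -> L (x - y) = L x - L y.
Proof.
move=> hL; have := hL.1 (-1) y x; rewrite !scaleN1r addrC => ->.
by rewrite addrC.
Qed.

Definition packlin (f : X -> X) (lf : linear f) : {linear X -> X} :=
  HB.pack f (GRing.isLinear.Build _ _ _ _ _ lf).

Lemma blo_linear (L : X -> X) : bounded_linear_op L -> linear L.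
Proof. by move=> hL a u v; exact: hL.1. Qed.

Lemma blo_bounded (L : X -> X) : bounded_linear_op L -> bounded_fun_norm L.
Proof.
move=> hL; have lf := blo_linear _ hL.
exact: ((bounded_funP (packlin _ lf)).2 ((linear_bounded_continuous (packlin _ lf)).2 hL.2)).
Qed.

Lemma unif_bound (T : R -> X -> X) h : C0_semigroup T -> 0 <= h ->
  exists M, 0 < M /\ forall s x, 0 <= s <= h -> `|T s x| <= M * `|x|.
Proof.
move=> [Tlin T0 Tsg Tc] h0.
pose F := [set f | exists s, 0 <= s <= h /\ f = T s].
have : uniform_bounded F.
  apply: Banach_Steinhauss.
    move=> f [s [/andP[s0 _] ->]]; split.
      exact: blo_bounded _ (Tlin s s0).
    exact: blo_linear _ (Tlin s s0).
  move=> x.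
  have cx : {within `[0, h], continuous (fun t => T t x)}.
    apply: (continuous_subspaceW _ (Tc x)) => t /=; rewrite in_itv /=.
    by case/andP.
  have /compact_bounded := continuous_compact cx (@segment_compact _ 0 h).
  move=> [M [_ hM]]; exists (M + 1) => f [s [sh ->]].
  by apply: (hM (M + 1)); [rewrite ltrDl | exists s => //; rewrite in_itv].
move=> /(_ 1) [M hM]; exists (Num.max M 1); split; first by rewrite lt_max ltr01 orbT.
move=> s x sh.
have s0 : 0 <= s by case/andP: sh.
have [->|x0] := eqVneq x 0.
  by rewrite (lin0 _ (Tlin s s0)) normr0 mulr0.
have nx : 0 < `|x| by rewrite normr_gt0.
have ex : x = `|x| *: (`|x|^-1 *: x) by rewrite scalerA divff ?scale1r // gt_eqF.
rewrite {1}ex (linZ _ _ _ (Tlin s s0)) normrZ normr_id mulrC ler_pM2r //.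
rewrite le_max; apply/orP; left.
apply: hM; first by exists s.
by rewrite normrZ normfV normr_id mulVf // gt_eqF.
Qed.

Lemma telesc (T : R -> X -> X) v t m : C0_semigroup T -> 0 <= t ->
  T (m%:R * t) v - v = \sum_(j < m) T (j%:R * t) (T t v - v).
Proof.
move=> hT t0; have [Tlin T0 Tsg _] := hT.
elim: m => [|m IH]; first by rewrite big_ord0 mul0r T0 subrr.
rewrite big_ord_recr /= -IH.
have mt0 : 0 <= m%:R * t by rewrite mulr_ge0.
rewrite (linB _ _ _ (Tlin _ mt0)) -Tsg // -[m.+1]addn1 natrD mulrDl mul1r.
by rewrite [RHS]addrC addrA subrK.
Qed.

Lemma mvi (T : R -> X -> X) D A h v M : C0_semigroup T -> generates D A T ->
  0 < h -> 0 < M -> (forall s x, 0 <= s <= h -> `|T s x| <= M * `|x|) -> D v ->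
  `|T h v - v| <= M * h * `|A v|.
Proof.
move=> hT [_ gen] h0 M0 hM Dv.
pose q t := t^-1 *: (T t v - v).
have bnd : forall N : nat, `|T h v - v| <= M * h * `|q (h / N.+1%:R)|.
  move=> N; set t := h / N.+1%:R.
  have t0 : 0 < t by rewrite divr_gt0.
  have ht : h = N.+1%:R * t by rewrite /t mulrC divfK // pnatr_eq0.
  rewrite {1}ht (telesc _ _ _ _ hT (ltW t0)).
  apply: le_trans (ler_norm_sum _ _ _) _.
  apply: le_trans (ler_sum _ (fun (j : 'I_N.+1) _ => hM (j%:R * t) (T t v - v) _)) _.
    move=> j _; rewrite mulr_ge0 ?ler0n ?(ltW t0) //= ht ler_pM2r // ler_nat.
    exact: ltnW (ltn_ord j).
  rewrite sumr_const card_ord /q normrZ ger0_norm ?invr_ge0 ?(ltW t0) //.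
  rewrite ht -mulr_natr.
  rewrite le_eqVlt; apply/orP; left; apply/eqP; field; by rewrite gt_eqF.
apply/ler_addgt0Pr => e e0.
have e'0 : 0 < e / (M * h) by rewrite divr_gt0 // mulr_gt0.
move: (gen v Dv) => /cvgrPdist_lt /(_ _ e'0).
rewrite near_withinE => hnear.
have cs : (fun N : nat => h / N.+1%:R) @ \oo --> (0 : R).
  have -> : (fun N : nat => h / N.+1%:R) = (fun N => h * harmonic N) by [].
  by have := @cvgMl_tmp R nat \oo _ _ h 0 (@cvg_harmonic R); rewrite mulr0; apply.
have hev : \forall N \near \oo,
    (0 < h / N.+1%:R -> `|A v - q (h / N.+1%:R)| < e / (M * h)) := cs _ hnear.
have /filter_ex [N hN] := hev.
have tpos : 0 < h / N.+1%:R by rewrite divr_gt0.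
have hq := hN tpos.
apply: le_trans (bnd N) _.
have : `|q (h / N.+1%:R)| <= `|A v| + e / (M * h).
  rewrite -(subrK (A v) (q (h / N.+1%:R))).
  apply: le_trans (ler_normD _ _) _.
  rewrite addrC lerD2l distrC ltW //.
move=> hle; apply: le_trans (ler_wpM2l _ hle) _.
  by rewrite mulr_ge0 ?ltW.
rewrite mulrDr; rewrite le_eqVlt; apply/orP; left; apply/eqP; field; by rewrite !gt_eqF.
Qed.

Lemma ker_closed (T : R -> X -> X) (D : set X) (A : X -> X) (u : X) :
  C0_semigroup T -> generates D A T ->
  (forall e : R, 0 < e -> exists x : X,
     D x /\ `|u - x| + `|A x| < e) ->
  D u /\ A u = 0.
Proof.
move=> hC hgen happ.
have [Tlin T0 Tsg Tc] := hC.
have fix1 : forall h, 0 < h -> T h u = u.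
  move=> h h0; have [M [M0 hM]] := unif_bound T h hC (ltW h0).
  have hh : 0 <= h <= h by rewrite lexx ltW.
  apply/eqP; rewrite -subr_eq0 -normr_le0; apply/ler_addgt0Pr => e e0.
  rewrite add0r.
  pose C := M + M * h + 1.
  have C0 : 0 < C by rewrite /C !addr_gt0 ?mulr_gt0.
  pose eta := e / C.
  have eta0 : 0 < eta by rewrite divr_gt0.
  have [x [Dx hx]] := happ eta eta0.
  have hux : `|u - x| <= eta by apply: le_trans (ltW hx); rewrite lerDl.
  have hAx : `|A x| <= eta by apply: le_trans (ltW hx); rewrite lerDr.
  have eq : T h u - u = T h (u - x) + (T h x - x) + (x - u).
    by rewrite (linB _ _ _ (Tlin h (ltW h0))) !addrA !subrK.
  rewrite eq.
  apply: le_trans (ler_normD _ _) _.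
  apply: le_trans (lerD (ler_normD _ _) (lexx _)) _.
  have n1 : `|T h (u - x)| <= M * eta.
    by apply: le_trans (hM h _ hh) _; rewrite ler_pM2l.
  have n3 : `|T h x - x| <= M * h * eta.
    apply: le_trans (mvi T D A h x M hC hgen h0 M0 hM Dx) _.
    by rewrite ler_pM2l ?mulr_gt0.
  have n4 : `|x - u| <= eta by rewrite distrC.
  apply: le_trans (lerD (lerD n1 n3) n4) _.
  rewrite le_eqVlt; apply/orP; left; apply/eqP.
  rewrite /eta /C; field; by rewrite gt_eqF.
have cvq : (fun t => t^-1 *: (T t u - u)) @ 0^'+ --> 0.
  apply/cvgrPdist_lt => e e0; rewrite near_withinE; apply: nearW => t t0.
  by rewrite fix1 // subrr scaler0 subrr normr0.
have Du : D u by apply/(hgen.1 u); exact: (cvgP _ cvq).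
split=> //.
have := hgen.2 u Du => cvA.
exact: (cvg_unique _ cvA cvq).
Qed.
End H.

Theorem lemma2p7 (R : realType) (X : completeNormedModType R)
  (le : X -> X -> Prop) (n : nat)
  (D : 'rV[R]_n -> set X) (A : 'rV[R]_n -> X -> X)
  (T : 'rV[R]_n -> R -> X -> X) :
  banach_lattice le ->
  (forall w, nonneg_vec w ->
     [/\ C0_semigroup (T w), generates (D w) (A w) (T w),
         positive_semigroup le (T w) & eventually_compact (T w)]) ->
  (forall (wk : nat -> 'rV[R]_n) (w : 'rV[R]_n),
     (forall k, nonneg_vec (wk k)) -> nonneg_vec w -> wk @ \oo --> w ->
     (fun k => gap_bar (D (wk k)) (A (wk k)) (D w) (A w)) @ \oo --> 0%E) ->
  (forall w, nonneg_vec w -> spectral_bound (D w) (A w) = 0%E ->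
     geom_eq_alg_mult0 (D w) (A w) /\ nonneg_basis_kernel le (D w) (A w)) ->
  forall (wk : nat -> 'rV[R]_n) (w : 'rV[R]_n) (uk : nat -> X) (u : X),
    (forall k, nonneg_vec (wk k) /\ spectral_bound (D (wk k)) (A (wk k)) = 0%E) ->
    nonneg_vec w -> spectral_bound (D w) (A w) = 0%E ->
    wk @ \oo --> w ->
    (forall k, Nset le (D (wk k)) (A (wk k)) (uk k)) ->
    uk @ \oo --> u ->
    Nset le (D w) (A w) u.
Proof.
move=> BL HT Hgap _ wk w uk u Hwk Hw _ cvw HN cvu.
have [hC hgen _ _] := HT w Hw.
split.
  apply/eqP; rewrite -subr_eq0 -normr_le0; apply/ler_addgt0Pr => e e0.
  rewrite add0r.
  move: (cvu) => /cvgrPdist_lt /(_ e e0) /filter_ex [k hk].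
  have := ler_dist_dist u (uk k); rewrite (HN k).1 => h1.
  exact: le_trans h1 (ltW hk).
split; first exact: (cone_closed _ _ _ _ _ BL (fun k => (HN k).2.1) cvu).
apply: (ker_closed _ _ _ _ _ _ hC hgen) => e e0.
have e20 : 0 < e / 2 by rewrite divr_gt0.
have cg := Hgap wk w (fun k => (Hwk k).1) Hw cvw.
have lt0 : (0 < (e / 2)%:E)%E by rewrite lte_fin.
have g1 : \forall k \near \oo,
    (gap_bar (D (wk k)) (A (wk k)) (D w) (A w) < (e / 2)%:E)%E
  := cg _ (open_ereal_lt' lt0).
move: (cvu) => /cvgrPdist_lt /(_ _ e20) g2.
have [k [hk1 hk2]] := filter_ex (filterI g1 g2).
set G := graph (D w) (A w).
have hinf : (ereal_inf [set (pdist (uk k, 0) v)%:E | v in G] < (e / 2)%:E)%E.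
  apply: le_lt_trans hk1.
  apply: (@le_trans _ _ (gap_d (graph (D (wk k)) (A (wk k))) G)).
    apply: ereal_sup_ubound; right; exists (uk k, 0) => //; split.
      by exists (uk k); [exact: (HN k).2.2.1 | rewrite (HN k).2.2.2].
    by rewrite /pnorm /= (HN k).1 normr0 addr0.
  by rewrite /gap_bar le_max lexx.
have [y [v [x Dx hv] <-] hy] := ereal_inf_lt hinf.
rewrite -hv in hy.
rewrite lte_fin /pdist /= sub0r normrN in hy.
exists x; split => //.
have t : `|u - x| <= `|u - uk k| + `|uk k - x| by apply: ler_distD.
apply: le_lt_trans (lerD t (lexx _)) _.
by rewrite -addrA [e](splitr e); apply: ltrD.
Qed.
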